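(* Let $k,l'$ be positive integers with $l'<k$. Then for every $n$, \[ f(n,k,n-l') \le f(n,l',n-l')+La\big(n,P_{k-l'+1,2^{l'}}\big). \]
   Context: $[n]=\{1,\dots,n\}$. A chain of length $m$ is a sequence of sets $F_1\subsetneq\dots\subsetneq F_m$; a family is $k$-Sperner if it contains no chain of length $k+1$. For a family $\mathcal{F}$ and a set $X$, $\mathcal{F}|_X=\{F\cap X: F\in\mathcal{F}\}$. A family $\mathcal{F}\subseteq 2^{[n]}$ is $l$-trace $k$-Sperner if for every $l$-element $L\subseteq[n]$, $\mathcal{F}|_L$ is $k$-Sperner; $f(n,k,l)$ denotes the maximum size of an $l$-trace $k$-Sperner family $\mathcal{F}\subseteq 2^{[n]}$. A family $\mathcal{F}$ of sets contains a poset $P$ if there is an injective map $i:P\to\mathcal{F}$ such that $p\le_P q$ implies $i(p)\subseteq i(q)$; otherwise $\mathcal{F}$ is $P$-free, and $La(n,P)$ is the maximum size of a $P$-free family $\mathcal{F}\subseteq 2^{[n]}$. For positive integers $h,c$, $T_{h,c}$ is the rooted tree of height $h$ (every root-to-leaf path has $h$ vertices) in which every non-leaf vertex has exactly $c$ children, and $P_{h,c}$ is the poset on the vertices of $T_{h,c}$ whose Hasse diagram is $T_{h,c}$ with all arcs directed towards the root (so each vertex is greater than its children, and the root is the maximum). *)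

(* Defs.v *)
From mathcomp Require Import all_boot.
Set Implicit Arguments. Unset Strict Implicit. Unset Printing Implicit Defensive.

Definition trace (T : finType) (F : {set {set T}}) (X : {set T}) : {set {set T}} :=
  [set A :&: X | A in F].

Definition has_chain (T : finType) (G : {set {set T}}) (m : nat) : bool :=
  [exists t : m.-tuple {set T},
     all (fun A => A \in G) (val t) && sorted (fun A B : {set T} => A \proper B) (val t)].

Definition k_sperner (T : finType) (G : {set {set T}}) (k : nat) : bool :=
  ~~ has_chain G k.+1.

Definition trace_k_sperner (n k l : nat) (F : {set {set 'I_n}}) : bool :=
  [forall L : {set 'I_n}, (#|L| == l) ==> k_sperner (trace F L) k].

Definition f (n k l : nat) : nat :=
  \max_(F : {set {set 'I_n}} | trace_k_sperner k l F) #|F|.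

Definition contains_poset (P : finType) (le : rel P) (n : nat)
    (F : {set {set 'I_n}}) : bool :=
  [exists i : {ffun P -> {set 'I_n}},
     [&& injectiveb i, [forall p, i p \in F] &
         [forall p, forall q, le p q ==> (i p \subset i q)]]].

Definition La (P : finType) (le : rel P) (n : nat) : nat :=
  \max_(F : {set {set 'I_n}} | ~~ contains_poset le F) #|F|.

(* Vertices of T_{h,c}: words over 'I_c of length d < h (root = empty word,
   children of w are w ++ [:: j]); every root-to-leaf path has h vertices. *)
Definition tree_vertex (h c : nat) : finType := {d : 'I_h & d.-tuple 'I_c}.

(* Order of P_{h,c}: u <= v iff v is an ancestor of (or equal to) u,
   i.e. the word of v is a prefix of the word of u; the root is the maximum. *)
Definition tree_le (h c : nat) : rel (tree_vertex h c) :=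
  fun u v => prefix (val (tagged v)) (val (tagged u)).

Definition La_tree (n h c : nat) : nat := La (@tree_le h c) n.

(* Main.v *)
Require Import Defs.
From mathcomp Require Import all_boot.
From mathcomp Require Import zify.
Set Implicit Arguments. Unset Strict Implicit. Unset Printing Implicit Defensive.

Lemma has_chainP (T : finType) (G : {set {set T}}) m :
  reflect (exists s : seq {set T}, [/\ size s = m, all (fun A => A \in G) s
            & sorted (fun A B : {set T} => A \proper B) s]) (has_chain G m).
Proof.
apply: (iffP existsP) => [[t /andP[Ha Hs]] | [s [Hsz Ha Hs]]].
  by exists (val t); split => //; rewrite size_tuple.
have Hsz' : size s == m by apply/eqP.
by exists (Tuple Hsz'); apply/andP.
Qed.

Lemma sorted_rcons2 (T : Type) (e : rel T) s x y :
  sorted e (rcons s x) -> e x y -> sorted e (rcons (rcons s x) y).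
Proof.
case: s => [|a s] /=; first by move=> _ ->.
by rewrite !rcons_path last_rcons => -> ->.
Qed.

Lemma sorted_cat_rcons (T : Type) (e : rel T) s x r :
  sorted e (rcons s x) -> sorted e (x :: r) -> sorted e (s ++ x :: r).
Proof.
case: s => [|a s] //=; rewrite rcons_path cat_path /= => /andP[-> ->] ->.
by [].
Qed.

Definition mkv h c (w : seq 'I_c) (H : size w < h) : tree_vertex h c :=
  existT (fun d : 'I_h => d.-tuple 'I_c) (Ordinal H) (@Tuple (size w) 'I_c w (eqxx _)).

Lemma count_lemma n (L : {set 'I_n}) l' (hL : #|L| = n - l') (U : {set 'I_n})
  (g : 'I_(2 ^ l') -> {set 'I_n}) (ginj : injective g)
  (gsub : forall x, g x \subset U) (gne : forall x, g x != U) :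
  exists x, g x :&: L != U :&: L.
Proof.
have [/existsP[x Hx]|Hno] := boolP [exists x, g x :&: L != U :&: L].
  by exists x.
have Heq : forall x, g x :&: L = U :&: L.
  move=> x; apply/eqP; apply: contraNT Hno => H; apply/existsP; by exists x.
pose G := fun o : option 'I_(2 ^ l') => (if o is Some x then g x else U) :\: L.
have rec : forall B, B = B :&: L :|: B :\: L by move=> B; rewrite setID.
have Ginj : injective G.
  have key : forall o, (if o is Some x then g x else U) :&: L = U :&: L.
    by case=> [x|] //; rewrite Heq.
  move=> o1 o2 HG.
  have E : (if o1 is Some x then g x else U) = (if o2 is Some x then g x else U).
    by rewrite (rec (if o1 is Some x then g x else U)) (rec (if o2 is Some x then g x else U)) !key; congr (_ :|: _).
  case: o1 o2 E {HG} => [x1|] [x2|] //=.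
  - by move/ginj => ->.
  - by move=> E; move: (gne x1); rewrite E eqxx.
  - by move=> E; move: (gne x2); rewrite E eqxx.
have H1 : #|[set G o | o in [set: option 'I_(2 ^ l')]]| = (2 ^ l').+1.
  by rewrite card_imset // cardsT card_option card_ord.
have H2 : [set G o | o in [set: option 'I_(2 ^ l')]] \subset powerset (~: L).
  apply/subsetP => B /imsetP[o _ ->]; rewrite powersetE /G setDE; exact: subsetIr.
have H3 := subset_leq_card H2.
rewrite H1 card_powerset in H3.
have HC : #|~: L| <= l'.
  have := cardsC L; rewrite card_ord hL; lia.
have := leq_pexp2l (isT : 0 < 2) HC.
lia.
Qed.

Lemma tree_chain n (F : {set {set 'I_n}}) (L : {set 'I_n}) l' h
  (hL : #|L| = n - l') (i : tree_vertex h (2 ^ l') -> {set 'I_n})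
  (Hinj : injective i) (HF : forall p, i p \in F)
  (Hle : forall p q, tree_le p q -> i p \subset i q) :
  forall j (w : seq 'I_(2 ^ l')) (Hw : size w < h), size w + j = h.-1 ->
  exists s : seq {set 'I_n}, [/\ size s = j, all (fun A => A \in trace F L) s
     & sorted (fun A B : {set 'I_n} => A \proper B) (rcons s (i (mkv Hw) :&: L))].
Proof.
elim=> [|j IH] w Hw Hj; first by exists [::]; split.
have Hwx : forall x, size (rcons w x) < h by move=> x; rewrite size_rcons; lia.
pose g := fun x => i (mkv (Hwx x)).
have gsub : forall x, g x \subset i (mkv Hw).
  by move=> x; apply: Hle; rewrite /tree_le /= prefix_rcons.
have ginj : injective g.
  move=> x y /Hinj /(congr1 (fun v : tree_vertex h (2 ^ l') => tval (tagged v))) /= /eqP.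
  by rewrite eqseq_rcons => /andP[_ /eqP].
have gne : forall x, g x != i (mkv Hw).
  move=> x; apply/negP => /eqP /Hinj /(congr1 (fun v : tree_vertex h (2 ^ l') => size (tval (tagged v)))) /=.
  rewrite size_rcons; lia.
have [x Hx] := count_lemma hL ginj gsub gne.
have Hj' : size (rcons w x) + j = h.-1 by rewrite size_rcons; lia.
have [s [Hs1 Hs2 Hs3]] := IH _ (Hwx x) Hj'.
exists (rcons s (g x :&: L)); split.
- by rewrite size_rcons Hs1.
- rewrite all_rcons Hs2 andbT; exact: (imset_f (fun A => A :&: L) (HF _)).
- apply: sorted_rcons2 => //; by rewrite properEneq Hx setSI.
Qed.

Theorem theorem3p1 (k l' : nat) (hl' : 0 < l') (hk : l' < k) (n : nat) :
  f n k (n - l') <= f n l' (n - l') + La_tree n (k - l').+1 (2 ^ l').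
Proof.
pose root := @mkv (k - l').+1 (2 ^ l') [::] (ltn0Sn _).
pose isroot (F : {set {set 'I_n}}) (A : {set 'I_n}) :=
  [exists i : {ffun tree_vertex (k - l').+1 (2 ^ l') -> {set 'I_n}},
    [&& injectiveb i, [forall p, i p \in F],
        [forall p, forall q, tree_le p q ==> (i p \subset i q)] & i root == A]].
apply/bigmax_leqP => F HF.
pose R := [set A | isroot F A].
rewrite -(cardsID R F); apply: leq_add.
- apply: (leq_bigmax_cond (F := fun G : {set {set 'I_n}} => #|G|)).
  apply/forallP => L; apply/implyP => /eqP HL.
  apply/negP => /has_chainP [[|x0 t] [Ht1 Ht2 Ht3]] //.
  move: Ht2 => /= /andP [Hx0 Ht2].
  case/imsetP: Hx0 => G1; rewrite in_setI => /andP [HG1F]; rewrite inE.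
  case/existsP => i /and4P [/injectiveP Hinj /forallP Hin Hle /eqP Hroot] Hx0.
  have Hle' : forall p q, tree_le p q -> i p \subset i q.
    by move=> p q Hpq; move/forallP: Hle => /(_ p) /forallP /(_ q) /implyP; apply.
  have [s [Hs1 Hs2 Hs3]] := tree_chain HL Hinj Hin Hle' (j:=k - l') (w:=[::]) (ltn0Sn (k - l')) erefl.
  move: HF => /forallP /(_ L) /implyP; rewrite HL eqxx => /(_ isT) /negP; apply.
  apply/has_chainP; exists (s ++ x0 :: t); split.
  + move: Ht1; rewrite size_cat Hs1 /=; lia.
  + rewrite all_cat Hs2 /= Hx0 (imset_f (fun A => A :&: L) HG1F) /=.
    apply: sub_all Ht2 => A /imsetP [B]; rewrite in_setI => /andP[HB _] ->.
    exact: imset_f.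
  + apply: sorted_cat_rcons => //.
    by rewrite Hx0 -Hroot.
- rewrite /La_tree /La.
  apply: (leq_bigmax_cond (F := fun G : {set {set 'I_n}} => #|G|)).
  apply/negP => /existsP [i /and3P [Hinj /forallP Hin Hle]].
  have := Hin root; rewrite in_setD inE => /andP [/negP Hnr Hroot]; apply: Hnr.
  apply/existsP; exists i; apply/and4P; split => //.
  apply/forallP => p; move: (Hin p); rewrite in_setD => /andP[_ ->] //.
Qed.
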